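(* For any input word $w\neq\sharp$, the LinMaxMatch tokenization procedure returns exactly the MaxMatch result $M(w)$: it calls MatchLoop$(w\sqcup,0)$ on the (non-augmented) trie, obtaining (tokens, $u$, $i$); if $i<|w|$ or $u\notin\{r,r_\sharp\}$ it returns $[\mathrm{UNK}]$, otherwise it returns tokens, and this output equals $M(w)$.
   Context: Setting: WordPiece tokenization with vocabulary $V$, suffix indicator string $\sharp$ (e.g. ''##''), unknown token $[\mathrm{UNK}]$; $\sqcup$ is a whitespace character not in the vocabulary alphabet. A trie is built from $V$ with root $r$ and node $r_\sharp$ for $\sharp$; $\delta(u,c)$ is the child of $u$ along edge $c$, or null; $\chi_v$ is the string of node $v$. $p_w$: longest non-empty prefix of $w$ in $V\setminus\{\varepsilon,\sharp\}$ (length not counting a leading $\sharp$; must start with $\sharp$ if $w$ does), $\varepsilon$ if none; $q_w:=\sharp w''$ where $w=p_w w''$. MaxMatch: $M(w)=[\,]$ if $w\in\{\varepsilon,\sharp\}$; else $[\mathrm{UNK}]$ if $p_w=\varepsilon$ or $M(q_w)=[\mathrm{UNK}]$; else $[p_w]+M(q_w)$. Failure link $f(v)$ and failure pops $F(v)$ of a node $v$ (with $w=\chi_v$): if $p_w=\varepsilon$ then $f(v)=\mathrm{null}$, $F(v)=[\,]$; otherwise $F(v)$ is the shortest non-empty list of successive longest-matching-prefix tokens popped from the start of $w$ until the remaining suffix (prefixed with $\sharp$) is represented by a trie node, and $f(v)$ is that node (null if impossible). MatchLoop$(s,i)$: set $u=r$, tokens $=[\,]$; while $i<|s|$: while $\delta(u,s[i])=\mathrm{null}$: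 if $f(u)=\mathrm{null}$ return (tokens,$u$,$i$); append $F(u)$ to tokens; $u\leftarrow f(u)$. Then $u\leftarrow\delta(u,s[i])$, $i\leftarrow i+1$. Finally return (tokens,$u$,$i$). *)

(* Defs.v *)
From mathcomp Require Import all_boot.
Set Implicit Arguments. Unset Strict Implicit. Unset Printing Implicit Defensive.

Inductive token (A : Type) := Tok of seq A | UNK.
Arguments UNK {A}.

Section WordPiece.
Variables (A : eqType) (sharp : seq A) (V : seq (seq A)).

Definition pcand (w x : seq A) : bool :=
  [&& x \in V, x != [::], x != sharp & (prefix sharp w ==> prefix sharp x)].

(* p_w : the longest candidate prefix of w, or eps if none *)
Definition pw (w : seq A) : seq A :=
  head [::] [seq take n w | n <- rev (iota 1 (size w)) & pcand w (take n w)].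

Definition qw (w : seq A) : seq A := sharp ++ drop (size (pw w)) w.

(* MaxMatch, with fuel; fuel (size w).+1 always suffices since each
   recursive call strictly decreases |w| (not counting a leading sharp). *)
Fixpoint MaxMatch_fuel (n : nat) (w : seq A) : seq (token A) :=
  match n with
  | 0 => [:: UNK]
  | n'.+1 =>
    if (w == [::]) || (w == sharp) then [::]
    else if pw w == [::] then [:: UNK]
    else match MaxMatch_fuel n' (qw w) with
         | [:: UNK] => [:: UNK]
         | l => Tok (pw w) :: l
         end
  end.

Definition MaxMatch (w : seq A) : seq (token A) := MaxMatch_fuel (size w).+1 w.

(* a string is a trie node iff it is a prefix of sharp or of some vocabulary token;
   root r = [::], r_sharp = sharp *)
Definition is_node (x : seq A) : bool := has (prefix x) (sharp :: V).

Definition delta (u : seq A) (c : A) : option (seq A) :=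
  if is_node (rcons u c) then Some (rcons u c) else None.

(* failure pops / failure link: successive MaxMatch pops w -> q_w -> q_{q_w} ...
   until the remaining string is a trie node; None = null link. *)
Fixpoint fail_fuel (n : nat) (w : seq A) : option (seq (token A) * seq A) :=
  match n with
  | 0 => None
  | n'.+1 =>
    if pw w == [::] then None
    else if is_node (qw w) then Some ([:: Tok (pw w)], qw w)
    else match fail_fuel n' (qw w) with
         | Some (l, x) => Some (Tok (pw w) :: l, x)
         | None => None
         end
  end.

(* (F(v), f(v)) if f(v) <> null, None if f(v) = null *)
Definition failure (v : seq A) : option (seq (token A) * seq A) :=
  fail_fuel (size v).+1 v.

(* inner while loop: follow failure links until delta(u,c) <> null
   (result flag true) or f(u) = null (flag false). Fuel (size u).+1 suffices. *)
Fixpoint follow (n : nat) (u : seq A) (c : A) : seq (token A) * seq A * bool :=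
  match n with
  | 0 => ([::], u, false)
  | n'.+1 =>
    if delta u c is Some _ then ([::], u, true)
    else match failure u with
         | None => ([::], u, false)
         | Some (F, v) =>
           let: (t, u', b) := follow n' v c in (F ++ t, u', b)
         end
  end.

Fixpoint loop (s : seq A) (u : seq A) (i : nat) (toks : seq (token A))
  : seq (token A) * seq A * nat :=
  match s with
  | [::] => (toks, u, i)
  | c :: s' =>
    let: (t, u', b) := follow (size u).+1 u c in
    if b then loop s' (rcons u' c) i.+1 (toks ++ t)
    else (toks ++ t, u', i)
  end.

Definition MatchLoop (s : seq A) (i : nat) : seq (token A) * seq A * nat :=
  loop (drop i s) [::] i [::].

Definition LinMaxMatch (ws : A) (w : seq A) : seq (token A) :=
  let: (toks, u, i) := MatchLoop (rcons w ws) 0 in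
  if (i < size w) || ~~ ((u == [::]) || (u == sharp)) then [:: UNK] else toks.

End WordPiece.

(* Main.v *)
Require Import Defs.
From mathcomp Require Import all_boot.
From mathcomp Require Import zify.
Set Implicit Arguments. Unset Strict Implicit. Unset Printing Implicit Defensive.

Section Proofs.
Variables (A : eqType) (sharp : seq A) (V : seq (seq A)).
Local Notation pw := (pw sharp V).
Local Notation qw := (qw sharp V).
Local Notation pcand := (pcand sharp V).
Local Notation is_node := (is_node sharp V).

Lemma prefix_common (a b y : seq A) :
  prefix a y -> prefix b y -> size a <= size b -> prefix a b.
Proof.
rewrite !prefixE => /eqP Ha /eqP Hb le.
by rewrite -Hb take_takel // Ha.
Qed.

Lemma is_node_rcons x c : is_node (rcons x c) -> is_node x.
Proof.
rewrite /Defs.is_node => /hasP [y Hy Hp]; apply/hasP; exists y => //.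
exact: prefix_trans (prefix_rcons x c) Hp.
Qed.

Lemma prefix_sharp_ext x c z : ~~ is_node (rcons x c) ->
  prefix sharp (x ++ c :: z) = prefix sharp x.
Proof.
move=> Hn; apply/idP/idP; last exact: prefix_catl.
move=> Hy; case Hx: (prefix sharp x) => //.
have Hr : prefix (rcons x c) (x ++ c :: z) by rewrite -cat_rcons prefix_prefix.
case: (leqP (size sharp) (size x)) => Hs.
  by rewrite -Hx; apply: prefix_common Hy _ Hs; apply: prefix_prefix.
exfalso; move/negP: Hn; apply; rewrite /Defs.is_node /= (prefix_common Hr Hy) //.
by rewrite size_rcons.
Qed.

Lemma pw_spec x : pw x != [::] ->
  exists n, [/\ 0 < n <= size x, pw x = take n x & pcand x (take n x)].
Proof.
rewrite /Defs.pw.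
case E: [seq n <- rev (iota 1 (size x)) | Defs.pcand sharp V x (take n x)] => [|n l] //= _.
have : n \in [seq n <- rev (iota 1 (size x)) | Defs.pcand sharp V x (take n x)].
  by rewrite E mem_head.
rewrite mem_filter mem_rev mem_iota => /andP [Hp Hb].
exists n; split => //.
Qed.

Lemma pw_size x : size (pw x) <= size x.
Proof.
case: (eqVneq (pw x) [::]) => [->//|/pw_spec [n [_ -> _]]].
by rewrite size_take_min geq_minr.
Qed.

Lemma pw_nil x : (forall n, 0 < n <= size x -> ~~ pcand x (take n x)) -> pw x = [::].
Proof.
move=> H; rewrite /Defs.pw.
rewrite (@eq_in_filter _ _ pred0); first by rewrite filter_pred0.
move=> n; rewrite mem_rev mem_iota add1n ltnS => Hn /=.
by apply/negbTE/H.
Qed.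

Lemma pw_sharp : pw sharp = [::].
Proof.
apply: pw_nil => n /andP [Hn0 Hn]; rewrite /Defs.pcand prefix_refl /=.
apply/negP => /and4P [_ _ Hne Hp].
move: (size_prefix Hp); rewrite size_takel // => Hs.
have En : n = size sharp by apply/anti_leq; rewrite Hn Hs.
by move: Hne; rewrite En take_size eqxx.
Qed.

Lemma pw_nil0 : pw [::] = [::].
Proof. by []. Qed.


Lemma pcand_ext x c z p : ~~ is_node (rcons x c) ->
  pcand (x ++ c :: z) p = pcand x p.
Proof. by move=> Hn; rewrite /Defs.pcand prefix_sharp_ext. Qed.

Lemma pw_ext x c z : ~~ is_node (rcons x c) -> pw (x ++ c :: z) = pw x.
Proof.
move=> Hn; rewrite /Defs.pw size_cat /= iotaD rev_cat filter_cat map_cat.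
rewrite (@eq_in_filter _ _ pred0 (rev (iota (1 + size x) (size z).+1))); last first.
  move=> n; rewrite mem_rev mem_iota => /andP [H1 H2] /=.
  apply/negbTE/negP => /and4P [HV _ _ _].
  move/negP: Hn; apply; apply/hasP; exists (take n (x ++ c :: z)).
    by rewrite inE HV orbT.
  apply: prefix_common (prefix_take _ _) _.
    by rewrite -cat_rcons prefix_prefix.
  rewrite size_rcons size_takel; first by lia.
  by move: H2; rewrite size_cat /=; lia.
rewrite filter_pred0 /=.
rewrite (@eq_in_filter _ _ (fun n => pcand x (take n x))); last first.
  move=> n; rewrite mem_rev mem_iota add1n ltnS => /andP [_ H2].
  by rewrite takel_cat // pcand_ext.
congr head; apply/eq_in_map => n; rewrite mem_filter mem_rev mem_iota add1n ltnS.
by move=> /and3P [_ _ H2]; rewrite takel_cat.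
Qed.

Lemma qw_ext x c z : ~~ is_node (rcons x c) -> qw (x ++ c :: z) = qw x ++ c :: z.
Proof.
move=> Hn; rewrite /Defs.qw pw_ext // drop_cat.
case: ltnP => H.
  by rewrite catA.
have -> : size (pw x) = size x by apply/anti_leq; rewrite H pw_size.
by rewrite subnn drop0 drop_size cats0.
Qed.


Definition mu x := if prefix sharp x then size x - size sharp else size x.

Lemma mu_le x : mu x <= size x.
Proof. by rewrite /mu; case: ifP => // _; apply: leq_subr. Qed.

Lemma mu_qw x : pw x != [::] -> mu (qw x) < mu x.
Proof.
move=> /pw_spec [n [/andP [H0 Hn] Hpw Hc]].
rewrite /mu /Defs.qw prefix_prefix Hpw size_takel // size_cat size_drop.
move: Hc; rewrite /Defs.pcand => /and4P [_ _ Hne Himp].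
case: ifP => Hs; last by lia.
move: Himp; rewrite Hs /= => Hp.
have Hle := size_prefix Hp; rewrite size_takel // in Hle.
have Hlt : size sharp < n.
  rewrite ltn_neqAle Hle andbT; apply/negP => /eqP E.
  move: Hp; rewrite prefixE E take_oversize ?size_take_min ?geq_minl // => /eqP Heq.
  by rewrite Heq eqxx in Hne.
lia.
Qed.

Definition MM x := MaxMatch_fuel sharp V (mu x).+1 x.

Lemma MMf_eq_gen n m x : mu x < n -> mu x < m ->
  MaxMatch_fuel sharp V n x = MaxMatch_fuel sharp V m x.
Proof.
elim: n m x => [|n IH] [|m] x //= Hn Hm.
case: ifP => // _; case: ifP => // Hp.
rewrite (IH m) //.
  by apply: leq_trans (mu_qw (negbT Hp)) _.
by apply: leq_trans (mu_qw (negbT Hp)) _.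
Qed.

Lemma MMf_eq n x : mu x < n -> MaxMatch_fuel sharp V n x = MM x.
Proof. by move=> H; apply: MMf_eq_gen. Qed.

Definition consU (p : seq A) (l : seq (token A)) :=
  match l with [:: UNK] => [:: UNK] | l => Tok p :: l end.

Lemma MM_eq x : MM x = if (x == [::]) || (x == sharp) then [::]
  else if pw x == [::] then [:: UNK] else consU (pw x) (MM (qw x)).
Proof.
rewrite {1}/MM /=; case: ifP => // _; case: ifP => // Hp.
rewrite MMf_eq //; last by apply: mu_qw; rewrite Hp.
by rewrite /consU; case: (MM (qw x)) => [|[?|] [|? ?]].
Qed.

Definition catU (T l : seq (token A)) :=
  match l with [:: UNK] => [:: UNK] | _ => T ++ l end.

Inductive PopP (P : pred (seq A)) : seq A -> seq (token A) -> seq A -> Prop :=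
| Pop0 x : PopP P x [::] x
| PopS x T y : P x -> pw x != [::] -> PopP P (qw x) T y -> PopP P x (Tok (pw x) :: T) y.

Lemma PopP_mono (P Q : pred (seq A)) x T y :
  (forall x, P x -> Q x) -> PopP P x T y -> PopP Q x T y.
Proof.
move=> HPQ; elim => [x0|x0 T0 y0 HP Hp _ IH]; first exact: Pop0.
by apply: PopS => //; apply: HPQ.
Qed.

Lemma PopP_cat P x T y T' z : PopP P x T y -> PopP P y T' z -> PopP P x (T ++ T') z.
Proof.
elim => [//|x0 T0 y0 HP Hp _ IH] H /=.
by apply: PopS => //; apply: IH.
Qed.

Lemma PopP_mu P x T y : PopP P x T y -> mu y <= mu x.
Proof.
elim => [//|x0 T0 y0 HP Hp _ IH].
by apply: leq_trans IH (ltnW (mu_qw Hp)).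
Qed.

Lemma PopP_mu_lt P x a T y : PopP P x (a :: T) y -> mu y < mu x.
Proof.
move=> H; inversion H as [|x0 T0 y0 HP Hp Hr]; subst.
by apply: leq_ltn_trans (PopP_mu Hr) (mu_qw Hp).
Qed.

Lemma pw_nonnil x : pw x != [::] -> (x == [::]) || (x == sharp) = false.
Proof.
move=> Hp; apply/negbTE/negP => /orP [] /eqP E; move: Hp.
  by rewrite E.
by rewrite E pw_sharp.
Qed.

Lemma M_pop P x T y : PopP P x T y -> MM x = catU T (MM y).
Proof.
elim => [x0|x0 T0 y0 HP Hp Hr IH].
  by rewrite /catU; case: (MM x0) => [|[?|] [|? ?]].
have HT : T0 = [::] \/ exists p T', T0 = Tok p :: T'.
  inversion Hr; [by left|by right; eauto].
rewrite MM_eq pw_nonnil // (negbTE Hp) IH /catU /consU; clear IH Hr.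
by case: HT => [->|[p [T' ->]]]; case: (MM y0) => [|[?|] [|? ?]].
Qed.

Lemma pop_ext c z x T y : PopP (fun x => ~~ is_node (rcons x c)) x T y ->
  PopP predT (x ++ c :: z) T (y ++ c :: z).
Proof.
elim => [x0|x0 T0 y0 HP Hp _ IH]; first exact: Pop0.
rewrite -(pw_ext z HP); apply: PopS => //; first by rewrite pw_ext.
by rewrite qw_ext.
Qed.


Local Notation Q x := (fun x' => (x' == x) || ~~ is_node x').

Lemma fail_some n x F v : mu x < n -> fail_fuel sharp V n x = Some (F, v) ->
  PopP (Q x) x F v /\ mu v < mu x.
Proof.
elim: n x F v => [//|n IH] x F v Hmu /=.
case: ifP => // Hp; case: ifP => Hn.
  move=> [<- <-]; split; last by apply: mu_qw; rewrite Hp.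
  by apply: PopS; [rewrite eqxx|rewrite Hp|apply: Pop0].
case E: (fail_fuel sharp V n (qw x)) => [[l x1]|] // [<- <-].
have Hq : mu (qw x) < mu x by apply: mu_qw; rewrite Hp.
have [H1 H2] := IH _ _ _ (leq_trans Hq Hmu) E.
split; last exact: ltn_trans H2 Hq.
apply: PopS; [by rewrite eqxx|by rewrite Hp|].
apply: PopP_mono H1 => x' /orP [/eqP ->|->]; last by rewrite orbT.
by rewrite Hn orbT.
Qed.

Lemma fail_none n x : mu x < n -> fail_fuel sharp V n x = None ->
  exists T y, [/\ PopP (Q x) x T y, pw y = [::] & (y == x) || ~~ is_node y].
Proof.
elim: n x => [//|n IH] x Hmu /=.
case: ifP => Hp.
  by move=> _; exists [::], x; split; [apply: Pop0|apply/eqP|rewrite eqxx].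
case: ifP => Hn //.
case E: (fail_fuel sharp V n (qw x)) => [[l x1]|] // _.
have Hq : mu (qw x) < mu x by apply: mu_qw; rewrite Hp.
have [T [y [H1 H2 H3]]] := IH _ (leq_trans Hq Hmu) E.
exists (Tok (pw x) :: T), y; split => //.
  apply: PopS; [by rewrite eqxx|by rewrite Hp|].
  apply: PopP_mono H1 => x' /orP [/eqP ->|->]; last by rewrite orbT.
  by rewrite Hn orbT.
by case/orP: H3 => [/eqP Ey|->]; [rewrite Ey Hn orbT|rewrite orbT].
Qed.

Definition Pc c := fun x => ~~ is_node (rcons x c).

Lemma Q_Pc c u x : ~~ is_node (rcons u c) -> Q u x -> Pc c x.
Proof.
move=> Hn /orP [/eqP ->//|Hx]; rewrite /Pc.
by apply/negP => /is_node_rcons; apply/negP.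
Qed.

Lemma follow_ok c n u t u' b : mu u < n -> follow sharp V n u c = (t, u', b) ->
  PopP (Pc c) u t u' /\
  (if b then is_node (rcons u' c) = true
   else ~~ is_node (rcons u' c) /\ Defs.failure sharp V u' = None).
Proof.
elim: n u t u' b => [//|n IH] u t u' b Hmu /=.
rewrite /delta; case: ifP => Hn.
  by move=> [<- <- <-]; split; [apply: Pop0|].
rewrite {1}/Defs.failure.
case Hf: (fail_fuel sharp V (size u).+1 u) => [[F v]|].
  case E: (follow sharp V n v c) => [[t0 u0] b0] [<- <- <-].
  have Hm : mu u < (size u).+1 by rewrite ltnS mu_le.
  have [H1 H2] := fail_some Hm Hf.
  have [H3 H4] := IH _ _ _ _ (leq_trans H2 Hmu) E.
  split => //; apply: PopP_cat H3.
  by apply: PopP_mono H1 => x; apply: Q_Pc; rewrite Hn.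
move=> [<- <- <-]; split; first exact: Pop0.
by rewrite Hn.
Qed.


Lemma catU_cat toks t l : t <> [:: UNK] -> catU toks (catU t l) = catU (toks ++ t) l.
Proof.
rewrite /catU => Ht; case: l => [|[?|] [|? ?]]; case: t Ht => [|[?|] [|? ?]] Ht //=;
  rewrite ?catA ?cats0 //; case: toks => [|? ?] //=; rewrite -?catA //=.
Qed.

Lemma PopP_notUNK P x t y : PopP P x t y -> t <> [:: UNK].
Proof. by case. Qed.

Lemma is_node_nil : is_node [::].
Proof. by rewrite /Defs.is_node /= prefix0s. Qed.

Lemma is_node_sharp : is_node sharp.
Proof. by rewrite /Defs.is_node /= prefix_refl. Qed.

Lemma failure_none_MM u : Defs.failure sharp V u = None ->
  ~~ ((u == [::]) || (u == sharp)) -> MM u = [:: UNK].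
Proof.
move=> Hf Hu.
have Hm : mu u < (size u).+1 by rewrite ltnS mu_le.
have [T [y [H1 H2 H3]]] := fail_none Hm Hf.
rewrite (M_pop H1) MM_eq H2 eqxx.
suff -> : (y == [::]) || (y == sharp) = false by [].
case/orP: H3 => [/eqP ->|Hy]; first exact: negbTE.
apply/negbTE/negP => /orP [] /eqP E; move: Hy; rewrite E.
  by rewrite is_node_nil.
by rewrite is_node_sharp.
Qed.

Lemma stuck_MM u c z : ~~ is_node (rcons u c) -> Defs.failure sharp V u = None ->
  MM (u ++ c :: z) = [:: UNK].
Proof.
move=> Hn Hf.
have Hm : mu u < (size u).+1 by rewrite ltnS mu_le.
have [T [y [H1 H2 H3]]] := fail_none Hm Hf.
have Hy : ~~ is_node (rcons y c).
  case/orP: H3 => [/eqP ->//|Hy]; apply/negP => /is_node_rcons Hy'.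
  by rewrite Hy' in Hy.
have H4 := pop_ext z (PopP_mono (fun x => Q_Pc Hn) H1).
rewrite (M_pop H4) MM_eq pw_ext // H2 eqxx.
suff -> : (y ++ c :: z == [::]) || (y ++ c :: z == sharp) = false by [].
apply/negbTE/negP => /orP [] /eqP E.
  by move: (congr1 size E); rewrite size_cat /= addnS.
move/negP: Hy; apply; rewrite /Defs.is_node /= -E -cat_rcons prefix_prefix.
by [].
Qed.


Lemma ws_nonnode (ws : A) (ws_notin_V : forall v, v \in V -> ws \notin v)
  (ws_notin_sharp : ws \notin sharp) u : ~~ is_node (rcons u ws).
Proof.
apply/negP => /hasP [y Hy /prefixP [s Es]].
have Hw : ws \in y by rewrite Es mem_cat mem_rcons mem_head.
move: Hy; rewrite inE => /orP [/eqP Ey|HyV].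
  by move: ws_notin_sharp; rewrite -Ey Hw.
by move: (ws_notin_V _ HyV); rewrite Hw.
Qed.

Lemma loop_cons c s u i toks : loop sharp V (c :: s) u i toks =
  let: (t, u', b) := follow sharp V (size u).+1 u c in
  if b then loop sharp V s (rcons u' c) i.+1 (toks ++ t) else (toks ++ t, u', i).
Proof. by []. Qed.

Lemma loop_ok (ws : A) (ws_notin_V : forall v, v \in V -> ws \notin v)
  (ws_notin_sharp : ws \notin sharp) r :
  forall p u toks, (forall z, MM (p ++ z) = catU toks (MM (u ++ z))) ->
  forall tk u' i', loop sharp V (rcons r ws) u (size p) toks = (tk, u', i') ->
  (if (i' < size p + size r) || ~~ ((u' == [::]) || (u' == sharp)) then [:: UNK] else tk)
  = MM (p ++ r).
Proof.
have Hnn := ws_nonnode ws_notin_V ws_notin_sharp.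
elim: r => [|c r IH] p u toks Hinv tk u' i'.
  have Hm : mu u < (size u).+1 by rewrite ltnS mu_le.
  rewrite [rcons _ _]/= loop_cons.
  case E: (follow sharp V (size u).+1 u ws) => [[t u0] b].
  have [H1 H2] := follow_ok Hm E.
  case: b E H2 => E H2; first by move: (Hnn u0); rewrite H2.
  move=> [<- <- <-]; rewrite addn0 ltnn /=.
  have := Hinv [::]; rewrite !cats0 => ->.
  rewrite (M_pop H1) catU_cat; last exact: PopP_notUNK H1.
  case: H2 => _ Hf.
  case: ifP => Hu.
    by rewrite failure_none_MM // Hu.
  move/negbT: Hu; rewrite negbK => Hu.
  by rewrite MM_eq Hu /= cats0.
have Hm : mu u < (size u).+1 by rewrite ltnS mu_le.
rewrite rcons_cons loop_cons.
case E: (follow sharp V (size u).+1 u c) => [[t u0] b].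
have [H1 H2] := follow_ok Hm E.
case: b E H2 => E H2.
  move=> Hl.
  have := IH (rcons p c) (rcons u0 c) (toks ++ t); rewrite size_rcons cat_rcons => IH'.
  rewrite addSnnS in IH'; rewrite IH' //.
  move=> z; rewrite !cat_rcons Hinv (M_pop (pop_ext z H1)) catU_cat //.
  exact: PopP_notUNK H1.
move=> [<- <- <-]; have -> : (size p < size p + size (c :: r)) = true by rewrite /=; lia.
case: H2 => Hn Hf.
by rewrite Hinv (M_pop (pop_ext r H1)) stuck_MM.
Qed.

End Proofs.

Theorem mainTheorem5 (A : eqType) (sharp : seq A) (V : seq (seq A)) (ws : A)
  (ws_notin_V : forall v, v \in V -> ws \notin v)
  (ws_notin_sharp : ws \notin sharp)
  (w : seq A) (w_neq_sharp : w <> sharp) :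
  LinMaxMatch sharp V ws w = MaxMatch sharp V w.
Proof.
rewrite /LinMaxMatch /MatchLoop drop0.
case E: (loop sharp V (rcons w ws) [::] 0 [::]) => [[tk u'] i'].
have H := @loop_ok A sharp V ws ws_notin_V ws_notin_sharp w [::] [::] [::].
rewrite /= in H; rewrite H //.
  by rewrite /MaxMatch MMf_eq // ltnS mu_le.
by move=> z; rewrite /catU; case: (MM sharp V z) => [|[?|] [|? ?]].
Qed.
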